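(* Let the columns of $K_1 = [ Y_1^\top \ X_1^\top ]^\top$, with $Y_1$ square and nonsingular, solve the generalized eigenvalue problem $M_1K_1 = M_2^\top K_1 \Lambda$. Then $L_1 = X_1Y_1^{-1}$ solves \[ A_2^\top L_1+B_2^\top = (B_1 +D_1L_1)(A_1 + B_1^\top L_1)^{-1}(D_2^\top + B_2L_1). \]
   Context: Two-player quadratic game with cost blocks $A_i\succ 0$, $B_i\in\mathbb{R}^{d_{-i}\times d_i}$, $D_i$ for player $i$ (cost $f_i=\tfrac12[x_i;x_{-i}]^\top\begin{bmatrix}A_i & B_i^\top\\ B_i& D_i\end{bmatrix}[x_i;x_{-i}]+a_i^\top x_i+b_i^\top x_{-i}$). $M_1=\begin{bmatrix}A_1 & B_1^\top\\ B_1 & D_1\end{bmatrix}$, $M_2=\begin{bmatrix}D_2 & B_2\\ B_2^\top & A_2\end{bmatrix}$ are invertible, $K_1\in\mathbb{C}^{d\times d_1}$, $Y_1\in\mathbb{C}^{d_1\times d_1}$, $X_1\in\mathbb{C}^{d_2\times d_1}$. The displayed equation is the rearranged fixed-point condition of player 1's composite conjecture update $L_1^+ = -\big(A_{2}^\top - (B_1 +D_1L_1)(A_1 + B_1^\top L_1)^{-1} B_{2}\big)^{-1}\big(B_{2}^\top - (B_1 +D_1L_1)(A_1 + B_1^\top L_1)^{-1} D_{2}^\top\big)$. *)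

(* Defs.v *)
From HB Require Import structures.
From mathcomp Require Import all_boot all_order all_algebra.
From mathcomp Require Import complex.
Set Implicit Arguments. Unset Strict Implicit. Unset Printing Implicit Defensive.
Import Order.TTheory GRing.Theory Num.Theory.
Local Open Scope ring_scope.

(* Real matrices live over an abstract real closed field R; complex
   matrices over R[i].  toC embeds real matrices into complex ones. *)
Definition toC (R : rcfType) (m n : nat) (A : 'M[R]_(m, n)) : 'M[R[i]]_(m, n) :=
  map_mx (fun x : R => (x%:C)%C) A.

Definition posdef (R : rcfType) (n : nat) (A : 'M[R]_n) : Prop :=
  A^T = A /\ forall x : 'cV[R]_n, x != 0 -> 0 < (x^T *m A *m x) 0 0.

Definition M1mx (R : rcfType) (d1 d2 : nat) (A1 : 'M[R]_d1) (B1 : 'M[R]_(d2, d1))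
  (D1 : 'M[R]_d2) : 'M[R]_(d1 + d2) := block_mx A1 B1^T B1 D1.

Definition M2mx (R : rcfType) (d1 d2 : nat) (A2 : 'M[R]_d2) (B2 : 'M[R]_(d1, d2))
  (D2 : 'M[R]_d1) : 'M[R]_(d1 + d2) := block_mx D2 B2 B2^T A2.

(* Main.v *)
Require Import Defs.
From HB Require Import structures.
From mathcomp Require Import all_boot all_order all_algebra.
From mathcomp Require Import complex.
Import Order.TTheory GRing.Theory Num.Theory.
Local Open Scope ring_scope.

Lemma toC_block (R : rcfType) m1 m2 n1 n2 (A : 'M[R]_(m1,n1)) (B : 'M[R]_(m1,n2))
  (C : 'M[R]_(m2,n1)) (D : 'M[R]_(m2,n2)) :
  toC (block_mx A B C D) = block_mx (toC A) (toC B) (toC C) (toC D).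
Proof. by rewrite /toC map_block_mx. Qed.

Theorem proposition3 (R : rcfType) (d1 d2 : nat)
  (A1 : 'M[R]_d1) (B1 : 'M[R]_(d2, d1)) (D1 : 'M[R]_d2)
  (A2 : 'M[R]_d2) (B2 : 'M[R]_(d1, d2)) (D2 : 'M[R]_d1)
  (Y1 : 'M[R[i]]_d1) (X1 : 'M[R[i]]_(d2, d1)) (lam : 'rV[R[i]]_d1) :
  posdef A1 -> posdef A2 ->
  M1mx A1 B1 D1 \in unitmx -> M2mx A2 B2 D2 \in unitmx ->
  Y1 \in unitmx ->
  toC (M1mx A1 B1 D1) *m col_mx Y1 X1
    = toC (M2mx A2 B2 D2)^T *m col_mx Y1 X1 *m diag_mx lam ->
  let L1 := X1 *m invmx Y1 in
  toC A1 + toC B1^T *m L1 \in unitmx ->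
  toC A2^T *m L1 + toC B2^T
    = (toC B1 + toC D1 *m L1) *m invmx (toC A1 + toC B1^T *m L1)
        *m (toC D2^T + toC B2 *m L1).
Proof.
move=> _ _ _ _ uY E L1 uP.
move: E; rewrite /M1mx /M2mx tr_block_mx trmxK !toC_block !mul_block_col mul_col_mx.
move/eq_col_mx => [E1 E2].
set T := Y1 *m diag_mx lam *m invmx Y1.
have HX : X1 = L1 *m Y1 by rewrite /L1 mulmxKV.
set P := toC A1 + toC B1^T *m L1.
set Q := toC D2^T + toC B2 *m L1.
set N := toC B2^T + toC A2^T *m L1.
have EP : P = Q *m T.
  rewrite /T !mulmxA -[P](mulmxK uY); congr (_ *m invmx Y1).
  by rewrite /P /Q !mulmxDl !mulmxA mulmxKV // E1 mulmxDl ?mulmxA mulmxKV.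
have EN : toC B1 + toC D1 *m L1 = N *m T.
  rewrite /T !mulmxA -[LHS](mulmxK uY); congr (_ *m invmx Y1).
  by rewrite /N !mulmxDl !mulmxA mulmxKV // E2 mulmxDl ?mulmxA mulmxKV.

have QT1 : Q *m (T *m invmx P) = 1%:M.
  by rewrite mulmxA -EP (mulmxV uP).
have [uQ _] := mulmx1_unit QT1.
have TPQ : T *m invmx P = invmx Q.
  by rewrite -[LHS]mul1mx -(mulVmx uQ) -(mulmxA (invmx Q)) QT1 mulmx1.
rewrite EN -(mulmxA N T) TPQ -(mulmxA N) (mulVmx uQ) mulmx1 addrC.
done.
Qed.
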